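(* Assume the setting and algorithm described in the context. If $0<\alpha\le\frac{\sqrt n}{\sqrt{8m}\,L}$, then for all $k\ge0$, almost surely, $$\mathbb E\big[t^{k+1}\,|\,\mathcal F^k\big]\le\Big(1-\frac1{4m}\Big)t^k+4m\alpha^2\|\overline{\nabla\mathbf f}(x^k)\|^2+\frac{9}{4mn}\|x^k-Jx^k\|^2 .$$
   Context: Setting. Let $n,m,p\ge1$ be integers and $\mathcal V=\{1,\dots,n\}$. For each $i\in\mathcal V$ and $j\in\{1,\dots,m\}$, $f_{i,j}:\mathbb R^p\to\mathbb R$ is differentiable and $L$-smooth for some $L>0$, i.e. $\|\nabla f_{i,j}(x)-\nabla f_{i,j}(y)\|\le L\|x-y\|$ for all $x,y\in\mathbb R^p$. Let $f_i:=\frac1m\sum_{j=1}^m f_{i,j}$ and $F:=\frac1n\sum_{i=1}^n f_i$, and assume $F^*:=\inf_{x\in\mathbb R^p}F(x)>-\infty$. Let $\underline W=(\underline w_{ir})\in\mathbb R^{n\times n}$ be a nonnegative, primitive, doubly stochastic matrix ($\underline W\mathbf 1_n=\mathbf 1_n$, $\mathbf 1_n^\top\underline W=\mathbf 1_n^\top$), and let $\lambda\in[0,1)$ be its second largest singular value. Any expression with $\lambda$ in a denominator is read as $+\infty$ when $\lambda=0$. Algorithm GT-SAGA with step-size $\alpha>0$: fix a deterministic $\bar x^0\in\mathbb R^p$; for all $i\in\mathcal V$ set $x_i^0=\bar x^0$, $z_{i,j}^0=x_i^0$ for all $j$, $y_i^0=0$, $g_i^{-1}=0$. For $k=0,1,2,\dots$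 and every $i\in\mathcal V$: draw $\tau_i^k$ uniformly from $\{1,\dots,m\}$; set $g_i^k=\nabla f_{i,\tau_i^k}(x_i^k)-\nabla f_{i,\tau_i^k}(z_{i,\tau_i^k}^k)+\frac1m\sum_{j=1}^m\nabla f_{i,j}(z_{i,j}^k)$; set $y_i^{k+1}=\sum_{r=1}^n\underline w_{ir}(y_r^k+g_r^k-g_r^{k-1})$; set $x_i^{k+1}=\sum_{r=1}^n\underline w_{ir}(x_r^k-\alpha y_r^{k+1})$; draw $s_i^k$ uniformly from $\{1,\dots,m\}$; set $z_{i,j}^{k+1}=x_i^k$ if $j=s_i^k$ and $z_{i,j}^{k+1}=z_{i,j}^k$ otherwise. The family $\{\tau_i^k,s_i^k: i\in\mathcal V,k\ge0\}$ is independent. Notation. $x^k,y^k,g^k\in\mathbb R^{np}$ stack the $x_i^k$, $y_i^k$, $g_i^k$; $\nabla\mathbf f(x^k)\in\mathbb R^{np}$ stacks $\nabla f_i(x_i^k)$, $i=1,\dots,n$; $W=\underline W\otimes I_p$, $J=(\frac1n\mathbf 1_n\mathbf 1_n^\top)\otimes I_p$; $\bar x^k=\frac1n\sum_i x_i^k$, $\bar g^k=\frac1n\sum_i g_i^k$, $\overline{\nabla\mathbf f}(x^k)=\frac1n\sum_i\nabla f_i(x_i^k)$. $\mathcal F^0$ is the trivial $\sigma$-algebra and $\mathcal F^k=\sigma(\{\tau_i^t,s_i^t:i\in\mathcal V,\ t\le k-1\})$ for $k\ge1$. $t^k:=\frac1n\sum_{i=1}^n\frac1m\sum_{j=1}^m\|\bar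 x^k-z_{i,j}^k\|^2$. $\|\nabla\mathbf f(x^0)\|^2:=\sum_{i=1}^n\|\nabla f_i(\bar x^0)\|^2$. Norms are Euclidean (spectral for matrices); vector and matrix inequalities are entrywise. *)

(* Defs.v *)
From HB Require Import structures.
From mathcomp Require Import all_boot all_order all_algebra.
From mathcomp Require Import all_classical all_reals.
From mathcomp Require Import topology normedtype derive.
Set Implicit Arguments. Unset Strict Implicit. Unset Printing Implicit Defensive.
Import Order.TTheory GRing.Theory Num.Theory.
Local Open Scope ring_scope.

Section GTSAGA.
Variables (R : realType) (n m p : nat).

Definition sqn (v : 'rV[R]_p) : R := \sum_(l < p) (v 0 l) ^+ 2.
Definition enorm (v : 'rV[R]_p) : R := Num.sqrt (sqn v).

(* one draw per node: (tau_i^k, s_i^k) *)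
Definition draw := {ffun 'I_n -> 'I_m * 'I_m}.

Record state := State {
  st_x : 'I_n -> 'rV[R]_p;
  st_y : 'I_n -> 'rV[R]_p;
  st_gprev : 'I_n -> 'rV[R]_p;
  st_z : 'I_n -> 'I_m -> 'rV[R]_p
}.

Variables (gradf : 'I_n -> 'I_m -> 'rV[R]_p -> 'rV[R]_p)
          (W : 'M[R]_n) (alpha : R) (x0 : 'rV[R]_p).

Definition grad_fi (i : 'I_n) (x : 'rV[R]_p) : 'rV[R]_p :=
  (m%:R)^-1 *: \sum_(j < m) gradf i j x.

Definition saga_g (s : state) (d : draw) (i : 'I_n) : 'rV[R]_p :=
  gradf i (d i).1 (st_x s i) - gradf i (d i).1 (st_z s i (d i).1)
  + (m%:R)^-1 *: \sum_(j < m) gradf i j (st_z s i j).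

Definition step (s : state) (d : draw) : state :=
  let g := saga_g s d in
  let y' := fun i => \sum_(r < n) W i r *: (st_y s r + g r - st_gprev s r) in
  let x' := fun i => \sum_(r < n) W i r *: (st_x s r - alpha *: y' r) in
  let z' := fun i j => if j == (d i).2 then st_x s i else st_z s i j in
  State x' y' g z'.

Definition init : state :=
  State (fun _ => x0) (fun _ => 0) (fun _ => 0) (fun _ _ => x0).

Definition Omega (K : nat) := {ffun 'I_K -> draw}.

Definition run (K : nat) (omega : Omega K) (k : nat) : state :=
  foldl step init (take k [seq omega t | t <- enum 'I_K]).

Definition xbar (s : state) : 'rV[R]_p := (n%:R)^-1 *: \sum_(i < n) st_x s i.

Definition tk (s : state) : R :=
  (n%:R)^-1 * \sum_(i < n) ((m%:R)^-1 * \sum_(j < m) sqn (xbar s - st_z s i j)).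

(* || x^k - J x^k ||^2 *)
Definition consensus_err (s : state) : R := \sum_(i < n) sqn (st_x s i - xbar s).

Definition avg_grad_sq (s : state) : R :=
  sqn ((n%:R)^-1 *: \sum_(i < n) grad_fi i (st_x s i)).

End GTSAGA.

(* Probability on Omega K: the draws (tau_i^t, s_i^t), t < K, are independent
   and uniform on {1..m} ~ 'I_m, i.e. the law is uniform on the finite set Omega K. *)
Section Prob.
Variables (R : realType) (T : finType).
Definition expect (X : T -> R) : R := (#|T|%:R)^-1 * \sum_(w : T) X w.
End Prob.

(* F^k on Omega K: sigma-algebra generated by the draws of rounds t < k.
   A function is F^k-measurable iff it depends only on these coordinates. *)
Definition Fk_meas {D : Type} {K : nat} (T : Type) (k : nat)
    (Y : {ffun 'I_K -> D} -> T) : Prop :=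
  forall w w' : {ffun 'I_K -> D},
    (forall t : 'I_K, (t < k)%N -> w t = w' t) -> Y w = Y w'.

Definition is_cond_exp (R : realType) (D : finType) (K k : nat)
    (X Y : {ffun 'I_K -> D} -> R) : Prop :=
  Fk_meas k Y /\
  forall A : {ffun 'I_K -> D} -> bool, Fk_meas k A ->
    expect (fun w => X w * (A w)%:R) = expect (fun w => Y w * (A w)%:R).

(* Main.v *)
Require Import Defs.
From HB Require Import structures.
From mathcomp Require Import all_boot all_order all_algebra.
From mathcomp Require Import all_classical all_reals.
From mathcomp Require Import topology normedtype derive.
From mathcomp Require Import ring lra.
Set Implicit Arguments. Unset Strict Implicit. Unset Printing Implicit Defensive.
Import Order.TTheory GRing.Theory Num.Theory.
Import numFieldNormedType.Exports.
Local Open Scope ring_scope.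

Section Expect.
Variable R : realType.

Lemma expectE (T : finType) (X : T -> R) : expect X = (#|T|%:R)^-1 * \sum_w X w.
Proof. by []. Qed.

Lemma expectD (T : finType) (X Y : T -> R) :
  expect (fun w => X w + Y w) = expect X + expect Y.
Proof. by rewrite !expectE big_split mulrDr. Qed.

Lemma expectN (T : finType) (X : T -> R) :
  expect (fun w => - X w) = - expect X.
Proof. by rewrite !expectE sumrN mulrN. Qed.

Lemma expectZ (T : finType) (c : R) (X : T -> R) :
  expect (fun w => c * X w) = c * expect X.
Proof. by rewrite !expectE -mulr_sumr mulrCA. Qed.

Lemma expect_sum (T : finType) (I : finType) (F : I -> T -> R) :
  expect (fun w => \sum_i F i w) = \sum_i expect (F i).
Proof. by rewrite expectE exchange_big mulr_sumr. Qed.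

Lemma expect_cst (T : finType) (c : R) : (0 < #|T|)%N -> expect (fun _ : T => c) = c.
Proof.
move=> h; rewrite expectE sumr_const.
have -> : #|(xpredT : pred T)| = #|T| by apply: eq_card.
rewrite -[c *+ _]mulr_natl mulrA mulVf ?mul1r //.
by rewrite pnatr_eq0 -lt0n.
Qed.

Lemma expect_le (T : finType) (X Y : T -> R) :
  (forall w, X w <= Y w) -> expect X <= expect Y.
Proof.
move=> h; rewrite !expectE ler_wpM2l ?invr_ge0 ?ler0n //.
by apply: ler_sum => w _; apply: h.
Qed.

Lemma expect_ext (T : finType) (X Y : T -> R) :
  (forall w, X w = Y w) -> expect X = expect Y.
Proof. by move=> h; rewrite !expectE; congr (_ * _); apply: eq_bigr. Qed.

Lemma expect_prod (I A : finType) (F : I -> A -> R) : (0 < #|A|)%N ->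
  expect (fun f : {ffun I -> A} => \prod_i F i (f i)) = \prod_i expect (F i).
Proof.
move=> hA.
rewrite expectE -bigA_distr_bigA card_ffun natrX.
under [RHS]eq_bigr do rewrite expectE.
rewrite big_split /= prodr_const.
have -> : #|(xpredT : pred I)| = #|I| by apply: eq_card.
by rewrite exprVn.
Qed.

Lemma expect_coord1 (I A : finType) (i : I) (h : A -> R) : (0 < #|A|)%N ->
  expect (fun f : {ffun I -> A} => h (f i)) = expect h.
Proof.
move=> hA.
pose F := fun i' (a : A) => if i' == i then h a else 1.
transitivity (expect (fun f : {ffun I -> A} => \prod_i' F i' (f i'))).
  apply: expect_ext => f; rewrite (bigD1 i) //= /F eqxx big1 ?mulr1 //.
  by move=> j /negbTE ->.
rewrite expect_prod // (bigD1 i) //= /F eqxx big1 ?mulr1 //.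
move=> j /negbTE hj; rewrite (expect_ext (Y := fun _ => 1)) ?expect_cst //.
by move=> a; rewrite hj.
Qed.

Lemma expect_coord2 (I A : finType) (i r : I) (h1 h2 : A -> R) :
  (0 < #|A|)%N -> i != r ->
  expect (fun f : {ffun I -> A} => h1 (f i) * h2 (f r)) = expect h1 * expect h2.
Proof.
move=> hA hir.
pose F := fun i' (a : A) => if i' == i then h1 a else if i' == r then h2 a else 1.
have Fi : forall a, F i a = h1 a by move=> a; rewrite /F eqxx.
have Fr : forall a, F r a = h2 a by move=> a; rewrite /F eq_sym (negbTE hir) eqxx.
have Fo : forall j a, j != i -> j != r -> F j a = 1.
  by move=> j a /negbTE h1' /negbTE h2'; rewrite /F h1' h2'.
have split2 : forall G : I -> R, \prod_j G j = G i * G r * \prod_(j | (j != i) && (j != r)) G j.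
  move=> G; rewrite (bigD1 i) //= (bigD1 r) /=; last by rewrite eq_sym.
  by rewrite mulrA; congr (_ * _); apply: eq_bigl => j; rewrite andbC.
transitivity (expect (fun f : {ffun I -> A} => \prod_i' F i' (f i'))).
  apply: expect_ext => f; rewrite split2 Fi Fr big1 ?mulr1 //.
  by move=> j /andP[a b]; rewrite Fo.
rewrite expect_prod // split2 big1 ?mulr1.
  by congr (_ * _); apply: expect_ext.
move=> j /andP[a b]; rewrite (expect_ext (Y := fun _ => 1)) ?expect_cst //.
by move=> x; rewrite Fo.
Qed.

Lemma expect_pair (A B : finType) (h1 : A -> R) (h2 : B -> R) :
  expect (fun ab : A * B => h1 ab.1 * h2 ab.2) = expect h1 * expect h2.
Proof.
rewrite !expectE card_prod natrM invfM -(pair_bigA _ (fun a b => h1 a * h2 b)) /=.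
rewrite mulrACA; congr (_ * _); rewrite mulr_suml; apply: eq_bigr => a _.
by rewrite mulr_sumr.
Qed.

Lemma expect_fst (A B : finType) (h : A -> R) : (0 < #|B|)%N ->
  expect (fun ab : A * B => h ab.1) = expect h.
Proof.
move=> hB; rewrite (expect_ext (Y := fun ab : A * B => h ab.1 * (fun _ : B => 1) ab.2)).
  by rewrite (expect_pair h (fun _ : B => 1)) expect_cst ?mulr1.
by move=> w; rewrite mulr1.
Qed.

Lemma expect_snd (A B : finType) (h : B -> R) : (0 < #|A|)%N ->
  expect (fun ab : A * B => h ab.2) = expect h.
Proof.
move=> hA; rewrite (expect_ext (Y := fun ab : A * B => (fun _ : A => 1) ab.1 * h ab.2)).
  by rewrite (expect_pair (fun _ : A => 1) h) expect_cst ?mul1r.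
by move=> w; rewrite mul1r.
Qed.

End Expect.
Section Vec.
Variables (R : realType) (p : nat).
Implicit Types u v : 'rV[R]_p.

Definition dot u v : R := \sum_(l < p) u 0 l * v 0 l.

Lemma sqn_dot v : sqn v = dot v v.
Proof. by apply: eq_bigr => l _; rewrite expr2. Qed.

Lemma dotC u v : dot u v = dot v u.
Proof. by apply: eq_bigr => l _; rewrite mulrC. Qed.

Lemma dotDl u v (w : 'rV[R]_p) : dot (u + v) w = dot u w + dot v w.
Proof. by rewrite /dot -big_split; apply: eq_bigr => l _; rewrite !mxE mulrDl. Qed.

Lemma dotNl u (w : 'rV[R]_p) : dot (- u) w = - dot u w.
Proof. by rewrite /dot -sumrN; apply: eq_bigr => l _; rewrite !mxE mulNr. Qed.

Lemma dotBl u v (w : 'rV[R]_p) : dot (u - v) w = dot u w - dot v w.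
Proof. by rewrite dotDl dotNl. Qed.

Lemma dotZl a u (w : 'rV[R]_p) : dot (a *: u) w = a * dot u w.
Proof. by rewrite /dot mulr_sumr; apply: eq_bigr => l _; rewrite !mxE mulrA. Qed.

Lemma dot0l (w : 'rV[R]_p) : dot 0 w = 0.
Proof. by rewrite /dot big1 // => l _; rewrite mxE mul0r. Qed.

Lemma dot_suml (I : finType) (F : I -> 'rV[R]_p) (w : 'rV[R]_p) :
  dot (\sum_i F i) w = \sum_i dot (F i) w.
Proof.
rewrite /dot exchange_big /=; apply: eq_bigr => l _.
by rewrite summxE mulr_suml.
Qed.

Lemma dotDr u v (w : 'rV[R]_p) : dot w (u + v) = dot w u + dot w v.
Proof. by rewrite !(dotC w) dotDl. Qed.
Lemma dotBr u v (w : 'rV[R]_p) : dot w (u - v) = dot w u - dot w v.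
Proof. by rewrite !(dotC w) dotBl. Qed.
Lemma dotZr a u (w : 'rV[R]_p) : dot w (a *: u) = a * dot w u.
Proof. by rewrite !(dotC w) dotZl. Qed.
Lemma dot_sumr (I : finType) (F : I -> 'rV[R]_p) (w : 'rV[R]_p) :
  dot w (\sum_i F i) = \sum_i dot w (F i).
Proof. by rewrite dotC dot_suml; apply: eq_bigr => i _; rewrite dotC. Qed.

Lemma sqn_ge0 v : 0 <= sqn v.
Proof. by apply: sumr_ge0 => l _; apply: sqr_ge0. Qed.

Lemma sqnB u v : sqn (u - v) = sqn u - 2 * dot u v + sqn v.
Proof.
rewrite !sqn_dot dotBl !dotBr (dotC v u); ring.
Qed.

Lemma sqnD u v : sqn (u + v) = sqn u + 2 * dot u v + sqn v.
Proof.
rewrite !sqn_dot dotDl !dotDr (dotC v u); ring.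
Qed.

Lemma sqnZ a u : sqn (a *: u) = a ^+ 2 * sqn u.
Proof. by rewrite !sqn_dot dotZl dotZr mulrA expr2. Qed.

Lemma sqn_sym u v : sqn (u - v) = sqn (v - u).
Proof. by rewrite !sqnB dotC; ring. Qed.

Lemma young u v e : 0 < e -> 2 * dot u v <= e * sqn u + e^-1 * sqn v.
Proof.
move=> he.
have h := sqn_ge0 (e *: u - v).
rewrite sqnB sqnZ dotZl in h.
have he' : 0 < e^-1 by rewrite invr_gt0.
have := mulr_ge0 (ltW he') h.
have -> : e^-1 * (e ^+ 2 * sqn u - 2 * (e * dot u v) + sqn v)
   = e * sqn u - 2 * dot u v + e^-1 * sqn v.
  by field; rewrite gt_eqF.
lra.
Qed.

Lemma sqn_add2 u v : sqn (u + v) <= 2 * sqn u + 2 * sqn v.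
Proof.
have h := sqn_ge0 (u - v).
rewrite sqnB in h; rewrite sqnD; lra.
Qed.

Lemma enorm_sqn u v L : 0 < L -> enorm u <= L * enorm v -> sqn u <= L ^+ 2 * sqn v.
Proof.
move=> hL h.
have h0 : 0 <= enorm u by apply: sqrtr_ge0.
have := ler_pM h0 h0 h h.
by rewrite -!expr2 exprMn /enorm !sqr_sqrtr ?sqn_ge0.
Qed.

Definition EV (T : finType) (h : T -> 'rV[R]_p) : 'rV[R]_p :=
  \row_l expect (fun w => h w 0 l).

Lemma dot_EV (T : finType) (h : T -> 'rV[R]_p) c :
  dot (EV h) c = expect (fun w => dot (h w) c).
Proof.
rewrite /dot expect_sum; apply: eq_bigr => l _.
by rewrite mxE mulrC -expectZ; apply: expect_ext => w; rewrite mulrC.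
Qed.

Lemma EV_ext (T : finType) (h1 h2 : T -> 'rV[R]_p) :
  (forall w, h1 w = h2 w) -> EV h1 = EV h2.
Proof. by move=> h; apply/rowP => l; rewrite !mxE; apply: expect_ext => w; rewrite h. Qed.

Lemma EV_cst (T : finType) c : (0 < #|T|)%N -> EV (fun _ : T => c) = c.
Proof. by move=> h; apply/rowP => l; rewrite !mxE expect_cst. Qed.

Lemma EVD (T : finType) (h1 h2 : T -> 'rV[R]_p) :
  EV (fun w => h1 w + h2 w) = EV h1 + EV h2.
Proof.
apply/rowP => l; rewrite !mxE -expectD; apply: expect_ext => w; by rewrite mxE.
Qed.

Lemma EVN (T : finType) (h1 : T -> 'rV[R]_p) :
  EV (fun w => - h1 w) = - EV h1.
Proof.
apply/rowP => l; rewrite !mxE -expectN; apply: expect_ext => w; by rewrite mxE.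
Qed.

Lemma EVZ (T : finType) a (h1 : T -> 'rV[R]_p) :
  EV (fun w => a *: h1 w) = a *: EV h1.
Proof.
apply/rowP => l; rewrite !mxE -expectZ; apply: expect_ext => w; by rewrite mxE.
Qed.

Lemma EV_sum (T : finType) (I : finType) (F : I -> T -> 'rV[R]_p) :
  EV (fun w => \sum_i F i w) = \sum_i EV (F i).
Proof.
apply/rowP => l; rewrite !mxE summxE.
under eq_bigr do rewrite mxE.
rewrite -(expect_sum (fun i w => F i w 0 l)); apply: expect_ext => w.
by rewrite summxE.
Qed.

Lemma EV_coord1 (I A : finType) (i : I) (h : A -> 'rV[R]_p) : (0 < #|A|)%N ->
  EV (fun f : {ffun I -> A} => h (f i)) = EV h.
Proof.
move=> hA; apply/rowP => l; rewrite !mxE.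
exact: (expect_coord1 i (fun a => h a 0 l)).
Qed.

Lemma EV_fst (A B : finType) (h : A -> 'rV[R]_p) : (0 < #|B|)%N ->
  EV (fun ab : A * B => h ab.1) = EV h.
Proof. by move=> hB; apply/rowP => l; rewrite !mxE (expect_fst (fun a => h a 0 l)). Qed.

Lemma EV_snd (A B : finType) (h : B -> 'rV[R]_p) : (0 < #|A|)%N ->
  EV (fun ab : A * B => h ab.2) = EV h.
Proof. by move=> hA; apply/rowP => l; rewrite !mxE (expect_snd (fun a => h a 0 l)). Qed.

Lemma expect_sqn_center (T : finType) (h : T -> 'rV[R]_p) : (0 < #|T|)%N ->
  expect (fun w => sqn (h w - EV h)) = expect (fun w => sqn (h w)) - sqn (EV h).
Proof.
move=> hT.
rewrite (expect_ext (Y := fun w => sqn (h w) + (- 2 * dot (h w) (EV h) + sqn (EV h)))); last first.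
  by move=> w; rewrite sqnB; ring.
rewrite expectD expectD expect_cst // expectZ -dot_EV -sqn_dot; ring.
Qed.

Lemma var_le (T : finType) (h : T -> 'rV[R]_p) : (0 < #|T|)%N ->
  expect (fun w => sqn (h w - EV h)) <= expect (fun w => sqn (h w)).
Proof. by move=> hT; rewrite expect_sqn_center // lerBlDr lerDl sqn_ge0. Qed.

Lemma jensen (T : finType) (h : T -> 'rV[R]_p) : (0 < #|T|)%N ->
  sqn (EV h) <= expect (fun w => sqn (h w)).
Proof.
move=> hT; have := expect_sqn_center h hT.
have : 0 <= expect (fun w => sqn (h w - EV h)).
  by rewrite -(@expect_cst _ T 0 hT); apply: expect_le => w; apply: sqn_ge0.
lra.
Qed.

Lemma dot_indep (T : finType) (U V : T -> 'rV[R]_p) :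
  (forall l, expect (fun w => U w 0 l * V w 0 l) =
             expect (fun w => U w 0 l) * expect (fun w => V w 0 l)) ->
  expect (fun w => dot (U w) (V w)) = dot (EV U) (EV V).
Proof.
move=> h; rewrite /dot expect_sum; apply: eq_bigr => l _.
by rewrite h !mxE.
Qed.

End Vec.
Section Alg.
Variables (R : realType) (n m p : nat).
Variables (gradf : 'I_n -> 'I_m -> 'rV[R]_p -> 'rV[R]_p) (W : 'M[R]_n) (alpha : R).
Hypothesis hWcol : forall r, \sum_(i < n) W i r = 1.
Hypothesis hn : (0 < n)%N.

Local Arguments saga_g : simpl never.

Lemma sum_ABC (a b c : 'I_n -> 'rV[R]_p) :
  \sum_i (a i + b i - c i) = \sum_i a i + \sum_i b i - \sum_i c i.
Proof. by rewrite !big_split /= sumrN. Qed.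

Lemma sum_W (v : 'I_n -> 'rV[R]_p) : \sum_i \sum_r W i r *: v r = \sum_r v r.
Proof.
rewrite exchange_big /=; apply: eq_bigr => r _.
by rewrite -scaler_suml hWcol scale1r.
Qed.

Definition inv (s : state R n m p) := \sum_i st_y s i = \sum_i st_gprev s i.

Lemma inv_step s d : inv s -> inv (step gradf W alpha s d).
Proof.
rewrite /inv /= => h; by rewrite sum_W sum_ABC h addrAC subrr add0r.
Qed.

Lemma inv_foldl ds s : inv s -> inv (foldl (step gradf W alpha) s ds).
Proof.
elim: ds s => [|d ds IH] s hs //=; apply: IH; exact: inv_step.
Qed.

Lemma inv_init x0 : inv (init n m x0).
Proof. by rewrite /inv /= !big1. Qed.

Lemma xbar_step s d : inv s ->
  xbar (step gradf W alpha s d) =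
  xbar s - alpha *: ((n%:R)^-1 *: \sum_i saga_g gradf s d i).
Proof.
move=> h; rewrite /xbar /= sum_W.
rewrite big_split /= sumrN -scaler_sumr.
have -> : \sum_r (\sum_r0 W r r0 *: (st_y s r0 + saga_g gradf s d r0 - st_gprev s r0))
   = \sum_i saga_g gradf s d i.
  by rewrite sum_W sum_ABC h addrAC subrr add0r.
by rewrite scalerDr scalerN !scalerA mulrC.
Qed.

End Alg.
Lemma EV_E (R : realType) (p : nat) (T : finType) (h : T -> 'rV[R]_p) :
  EV h = (#|T|%:R)^-1 *: \sum_w h w.
Proof. by apply/rowP => l; rewrite !mxE summxE expectE. Qed.

Section Main.
Variables (R : realType) (n m p : nat).
Variables (gradf : 'I_n -> 'I_m -> 'rV[R]_p -> 'rV[R]_p) (W : 'M[R]_n) (alpha L : R).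
Hypothesis hn : (0 < n)%N.
Hypothesis hm : (0 < m)%N.
Hypothesis hsm : forall i j x y, sqn (gradf i j x - gradf i j y) <= L ^+ 2 * sqn (x - y).
Hypothesis hWcol : forall r, \sum_(i < n) W i r = 1.
Variable s : state R n m p.
Hypothesis hs : inv s.

Local Arguments saga_g : simpl never.

Lemma cardI : (0 < #|'I_m|)%N. Proof. by rewrite card_ord. Qed.
Lemma cardP : (0 < #|{: 'I_m * 'I_m}|)%N. Proof. by rewrite card_prod card_ord muln_gt0 hm. Qed.
Lemma cardD : (0 < #|{: draw n m}|)%N.
Proof. by rewrite card_ffun expn_gt0 cardP. Qed.
Lemma mR : (m%:R : R) != 0. Proof. by rewrite pnatr_eq0 -lt0n. Qed.
Lemma nR : (n%:R : R) != 0. Proof. by rewrite pnatr_eq0 -lt0n. Qed.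

Definition xb := xbar s.
Definition Di i (t : 'I_m) := gradf i t (st_x s i) - gradf i t (st_z s i t).
Definition mu i := (m%:R)^-1 *: \sum_(j < m) gradf i j (st_z s i j).
Definition gi i (a : 'I_m * 'I_m) := Di i a.1 + mu i.
Definition nu i := grad_fi gradf i (st_x s i).
Definition Gv := (n%:R)^-1 *: \sum_i nu i.
Definition u i (j c : 'I_m) := xb - (if j == c then st_x s i else st_z s i j).
Definition gb (d : draw n m) := (n%:R)^-1 *: \sum_i gi i (d i).

Lemma saga_gE d i : saga_g gradf s d i = gi i (d i).
Proof. by []. Qed.

Lemma EV_gi i : EV (gi i) = nu i.
Proof.
rewrite /gi EVD EV_cst ?cardP // EV_fst ?cardI // EV_E card_ord.
rewrite /Di sumrB scalerBr /mu /nu /grad_fi.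
by rewrite subrK.
Qed.

Lemma tk_step d : tk (step gradf W alpha s d) =
  (n%:R)^-1 * \sum_i ((m%:R)^-1 * \sum_j sqn (u i j (d i).2 - alpha *: gb d)).
Proof.
rewrite /tk xbar_step //; congr (_ * _); apply: eq_bigr => i _; congr (_ * _).
apply: eq_bigr => j _; congr sqn.
rewrite /u /gb /xb /=.
under [in RHS]eq_bigr do rewrite -saga_gE.
by rewrite addrAC.
Qed.


Lemma claimA i j : expect (fun d : draw n m => sqn (u i j (d i).2)) =
  expect (fun c => sqn (u i j c)).
Proof.
rewrite (expect_coord1 i (fun a => sqn (u i j a.2))) ?cardP //.
by rewrite (expect_snd (fun c => sqn (u i j c))) ?cardI.
Qed.

Lemma claimB i j : expect (fun d : draw n m => dot (u i j (d i).2) (gb d)) =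
  dot (EV (u i j)) Gv.
Proof.
transitivity ((n%:R)^-1 * \sum_r expect (fun d : draw n m => dot (u i j (d i).2) (gi r (d r)))).
  rewrite -expect_sum -expectZ; apply: expect_ext => d; by rewrite /gb dotZr dot_sumr.
rewrite /Gv dotZr dot_sumr; congr (_ * _); apply: eq_bigr => r _.
case: (eqVneq i r) => [<-|hir].
  rewrite (expect_coord1 i (fun a => dot (u i j a.2) (gi i a))) ?cardP //.
  rewrite -EV_gi /gi (EVD (fun a => Di i a.1) (fun _ => mu i)) EV_cst ?cardP // dotDr.
  rewrite (expect_ext (Y := fun a => dot (Di i a.1) (u i j a.2) + dot (u i j a.2) (mu i))); last first.
    by move=> a; rewrite dotDr dotC.
  rewrite expectD dot_indep; last first.
    move=> l; rewrite (expect_pair (fun t => Di i t 0 l) (fun c => u i j c 0 l)).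
    by rewrite (expect_fst (fun t => Di i t 0 l)) ?cardI // (expect_snd (fun c => u i j c 0 l)) ?cardI.
  rewrite -(dot_EV (fun a : 'I_m * 'I_m => u i j a.2)).
  by rewrite (EV_snd (fun c => u i j c)) ?cardI // dotC.
rewrite dot_indep; last first.
  move=> l; rewrite (expect_coord2 (fun a => u i j a.2 0 l) (fun a => gi r a 0 l)) ?cardP //.
  rewrite (expect_coord1 i (fun a => u i j a.2 0 l)) ?cardP //.
  by rewrite (expect_coord1 r (fun a => gi r a 0 l)) ?cardP.
rewrite (EV_coord1 i (fun a => u i j a.2)) ?cardP // (EV_snd (fun c => u i j c)) ?cardI //.
by rewrite (EV_coord1 r (gi r)) ?cardP // EV_gi.
Qed.


Definition ei i (a : 'I_m * 'I_m) := gi i a - nu i.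

Lemma EV_ei i : EV (ei i) = 0.
Proof.
rewrite /ei (EVD (gi i) (fun _ => - nu i)) EV_cst ?cardP // EV_gi.
by rewrite subrr.
Qed.

Lemma EV_ei_d i : EV (fun d : draw n m => ei i (d i)) = 0.
Proof. by rewrite (EV_coord1 i (ei i)) ?cardP // EV_ei. Qed.

Lemma gb_split d : gb d = Gv + (n%:R)^-1 *: \sum_i ei i (d i).
Proof.
rewrite /gb /ei /Gv sumrB scalerBr.
by rewrite addrC subrK.
Qed.

Definition Qv := ((n%:R) ^+ 2)^-1 *
   \sum_i (L ^+ 2 * ((m%:R)^-1 * \sum_t sqn (st_x s i - st_z s i t))).

Lemma var_ei i : expect (fun a => sqn (ei i a)) <=
   L ^+ 2 * ((m%:R)^-1 * \sum_t sqn (st_x s i - st_z s i t)).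
Proof.
have -> : ei i = fun a => Di i a.1 - EV (fun b : 'I_m * 'I_m => Di i b.1).
  apply: funext => a; rewrite /ei -EV_gi /gi.
  rewrite (EVD (fun a => Di i a.1) (fun _ => mu i)) EV_cst ?cardP //.
  by rewrite opprD addrACA subrr addr0.
apply: le_trans (var_le (fun b : 'I_m * 'I_m => Di i b.1) cardP) _.
rewrite (expect_fst (fun t => sqn (Di i t))) ?cardI // expectE card_ord.
rewrite mulrCA ler_wpM2l ?invr_ge0 ?ler0n // mulr_sumr.
by apply: ler_sum => t _; apply: hsm.
Qed.

Lemma claimC : expect (fun d : draw n m => sqn (gb d)) <= sqn Gv + Qv.
Proof.
rewrite (expect_ext (Y := fun d : draw n m => sqn Gv + (2 * dot ((n%:R)^-1 *: \sum_i ei i (d i)) Gv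
     + sqn ((n%:R)^-1 *: \sum_i ei i (d i))))); last first.
  by move=> d; rewrite gb_split sqnD dotC addrA.
rewrite !expectD expect_cst ?cardD //.
rewrite (expectZ 2 (fun d : draw n m => dot ((n%:R)^-1 *: \sum_i ei i (d i)) Gv)).
rewrite -(dot_EV (fun d : draw n m => (n%:R)^-1 *: \sum_i ei i (d i))).
rewrite (EVZ (n%:R)^-1 (fun d : draw n m => \sum_i ei i (d i))).
rewrite (EV_sum (fun i (d : draw n m) => ei i (d i))).
rewrite (eq_bigr (fun _ => 0)); last by move=> i _; rewrite EV_ei_d.
rewrite big1 // scaler0 dot0l mulr0 add0r lerD2l.
rewrite (expect_ext (Y := fun d : draw n m => ((n%:R) ^+ 2)^-1 *
     \sum_i \sum_r dot (ei i (d i)) (ei r (d r)))); last first.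
  move=> d; rewrite sqnZ sqn_dot dot_suml exprVn; congr (_ * _).
  by apply: eq_bigr => i _; rewrite dot_sumr.
rewrite expectZ /Qv ler_wpM2l ?invr_ge0 ?exprn_ge0 ?ler0n //.
rewrite expect_sum; apply: ler_sum => i _.
rewrite expect_sum (bigD1 i) //= big1 ?addr0; last first.
  move=> r hri.
  rewrite dot_indep; last first.
    move=> l; rewrite (expect_coord2 (fun a => ei i a 0 l) (fun a => ei r a 0 l)) ?cardP //; last by rewrite eq_sym.
    rewrite (expect_coord1 i (fun a => ei i a 0 l)) ?cardP //.
    by rewrite (expect_coord1 r (fun a => ei r a 0 l)) ?cardP.
  by rewrite EV_ei_d dot0l.
rewrite (expect_coord1 i (fun a => dot (ei i a) (ei i a))) ?cardP //.
apply: le_trans (var_ei i).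
by apply: expect_le => a; rewrite sqn_dot.
Qed.


Lemma sum_cst_ord (x : R) : \sum_(c < m) x = x * m%:R.
Proof.
rewrite sumr_const mulr_natr.
by have -> : #|(xpredT : pred 'I_m)| = m by rewrite -[RHS]card_ord; apply: eq_card.
Qed.

Lemma claimD i : (m%:R)^-1 * \sum_j expect (fun c => sqn (u i j c)) =
  (1 - (m%:R)^-1) * ((m%:R)^-1 * \sum_j sqn (xb - st_z s i j))
  + (m%:R)^-1 * sqn (xb - st_x s i).
Proof.
under eq_bigr do rewrite expectE card_ord.
rewrite -mulr_sumr exchange_big /=.
have h c : \sum_j sqn (u i j c) =
   \sum_j sqn (xb - st_z s i j) - sqn (xb - st_z s i c) + sqn (xb - st_x s i).
  rewrite (bigD1 c) //= [in RHS](bigD1 c) //= /u eqxx.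
  rewrite (eq_bigr (fun j => sqn (xb - st_z s i j))); last by move=> j /negbTE ->.
  by rewrite (addrC (sqn (xb - st_z s i c))) addrK addrC.
under eq_bigr do rewrite h.
rewrite !big_split /= sumrN !sum_cst_ord.
by field; apply: mR.
Qed.


Lemma sum_lin (k : nat) (F G : 'I_k -> R) (a b c : R) :
  \sum_(i < k) (a * F i + b * G i + c) = a * \sum_i F i + b * \sum_i G i + c * k%:R.
Proof.
rewrite !big_split /= -!mulr_sumr sumr_const mulr_natr.
by have -> : #|(xpredT : pred 'I_k)| = k by rewrite -[RHS]card_ord; apply: eq_card.
Qed.

Lemma per_term i j (eta : R) : 0 < eta ->
  expect (fun d : draw n m => sqn (u i j (d i).2 - alpha *: gb d)) <=
  (1 + eta) * expect (fun c => sqn (u i j c))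
  + ((eta^-1 + 1) * alpha ^+ 2 * sqn Gv + alpha ^+ 2 * Qv).
Proof.
move=> heta.
rewrite (expect_ext (Y := fun d : draw n m => sqn (u i j (d i).2) +
   ((- 2 * alpha) * dot (u i j (d i).2) (gb d) + alpha ^+ 2 * sqn (gb d)))); last first.
  by move=> d; rewrite sqnB dotZr sqnZ; ring.
rewrite !expectD claimA.
rewrite (expectZ (- 2 * alpha) (fun d : draw n m => dot (u i j (d i).2) (gb d))).
rewrite (expectZ (alpha ^+ 2) (fun d : draw n m => sqn (gb d))) claimB.
have hC := claimC.
have hA2 : 0 <= alpha ^+ 2 by apply: sqr_ge0.
have hC2 := ler_wpM2l hA2 hC.
have hY := young (EV (u i j)) (- alpha *: Gv) heta.
rewrite dotZr sqnZ sqrrN in hY.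
have hJ := jensen (u i j) cardI.
have hJ2 := ler_wpM2l (ltW heta) hJ.
have hG0 := sqn_ge0 Gv.
have hei : 0 < eta^-1 by rewrite invr_gt0.
set a := expect _ in hJ hJ2 *.
set b := expect _ in hC hC2 *.
set dd := dot _ _ in hY *.
set ub := sqn (EV (u i j)) in hY hJ hJ2.
have -> : (eta^-1 + 1) * alpha ^+ 2 * sqn Gv = eta^-1 * (alpha ^+ 2 * sqn Gv) + alpha ^+ 2 * sqn Gv by ring.
rewrite mulrDr in hC2.
move: hY hJ2 hC2; set q1 := eta^-1 * _; set q2 := eta * ub.
set q3 := alpha ^+ 2 * b; set q4 := alpha ^+ 2 * sqn Gv; set q5 := alpha ^+ 2 * Qv.
move=> hY hJ2 hC2.
have -> : - 2 * alpha * dd = 2 * (- alpha * dd) by ring.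
rewrite mulrDl mul1r.
lra.
Qed.


Lemma main_bound (eta : R) : 0 < eta ->
  expect (fun d : draw n m => tk (step gradf W alpha s d)) <=
  (1 + eta) * ((1 - (m%:R)^-1) * tk s + (m%:R)^-1 * ((n%:R)^-1 * consensus_err s))
  + ((eta^-1 + 1) * alpha ^+ 2 * sqn Gv + alpha ^+ 2 * Qv).
Proof.
move=> heta.
rewrite (expect_ext tk_step).
set K := (_ + _ * Qv).
rewrite (expectZ (n%:R)^-1 (fun d : draw n m =>
    \sum_i ((m%:R)^-1 * \sum_j sqn (u i j (d i).2 - alpha *: gb d)))).
rewrite (expect_sum (fun i (d : draw n m) =>
    (m%:R)^-1 * \sum_j sqn (u i j (d i).2 - alpha *: gb d))).
apply: (@le_trans _ _ ((n%:R)^-1 * \sum_i ((m%:R)^-1 *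
   \sum_j ((1 + eta) * expect (fun c => sqn (u i j c)) + K)))).
  rewrite ler_wpM2l ?invr_ge0 ?ler0n //; apply: ler_sum => i _.
  rewrite (expectZ (m%:R)^-1 (fun d : draw n m => \sum_j sqn (u i j (d i).2 - alpha *: gb d))).
  rewrite (expect_sum (fun j (d : draw n m) => sqn (u i j (d i).2 - alpha *: gb d))).
  rewrite ler_wpM2l ?invr_ge0 ?ler0n //; apply: ler_sum => j _.
  exact: per_term.
rewrite le_eqVlt; apply/orP; left; apply/eqP.
have e1 : forall i, (m%:R)^-1 * \sum_j ((1 + eta) * expect (fun c => sqn (u i j c)) + K)
   = (1 + eta) * ((m%:R)^-1 * \sum_j expect (fun c => sqn (u i j c))) + K.
  move=> i; rewrite big_split /= -mulr_sumr sum_cst_ord.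
  by field; apply: mR.
under eq_bigr do rewrite e1 claimD.
have e2 : forall i, (1 + eta) * ((1 - (m%:R)^-1) * ((m%:R)^-1 * \sum_j sqn (xb - st_z s i j))
      + (m%:R)^-1 * sqn (xb - st_x s i)) + K
   = ((1 + eta) * (1 - (m%:R)^-1)) * ((m%:R)^-1 * \sum_j sqn (xb - st_z s i j))
     + ((1 + eta) * (m%:R)^-1) * sqn (xb - st_x s i) + K.
  by move=> i; ring.
under eq_bigr do rewrite e2.
rewrite sum_lin /tk /consensus_err.
have e3 : \sum_i sqn (st_x s i - xbar s) = \sum_i sqn (xb - st_x s i).
  by apply: eq_bigr => i _; rewrite sqn_sym.
rewrite e3 /xb.
by field; rewrite nR mR.
Qed.


Lemma Q_bound : Qv <= ((n%:R) ^+ 2)^-1 * (L ^+ 2 * (2 * consensus_err s + 2 * (n%:R * tk s))).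
Proof.
rewrite /Qv ler_wpM2l ?invr_ge0 ?exprn_ge0 ?ler0n //.
rewrite -mulr_sumr ler_wpM2l ?sqr_ge0 //.
have -> : n%:R * tk s = \sum_i ((m%:R)^-1 * \sum_j sqn (xbar s - st_z s i j)).
  by rewrite /tk mulrA mulfV ?nR // mul1r.
rewrite /consensus_err !mulr_sumr -big_split /=.
apply: ler_sum => i _.
apply: (@le_trans _ _ ((m%:R)^-1 * \sum_t (2 * sqn (st_x s i - xbar s) + 2 * sqn (xbar s - st_z s i t)))).
  rewrite ler_wpM2l ?invr_ge0 ?ler0n //; apply: ler_sum => t _.
  have -> : st_x s i - st_z s i t = (st_x s i - xbar s) + (xbar s - st_z s i t).
    by rewrite addrA subrK.
  exact: sqn_add2.
rewrite le_eqVlt; apply/orP; left; apply/eqP.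
rewrite big_split /= -mulr_sumr sum_cst_ord -mulr_sumr.
by field; apply: mR.
Qed.

End Main.

Lemma coefT (R : realType) (M N q : R) : 1 <= M -> 1 <= N -> 0 <= q -> q * (8 * M) <= N ->
  (1 + (2 * M)^-1) * (1 - M^-1) + 2 * q * (N ^+ 2)^-1 * N <= 1 - (4 * M)^-1.
Proof.
move=> hM hN hq h8.
have M0 : 0 < M by apply: lt_le_trans ltr01 hM.
have N0 : 0 < N by apply: lt_le_trans ltr01 hN.
set a := M^-1. have ha : a * M = 1 by rewrite mulVf ?gt_eqF.
have a0 : 0 < a by rewrite invr_gt0.
set b := N^-1. have hb : b * N = 1 by rewrite mulVf ?gt_eqF.
have b0 : 0 < b by rewrite invr_gt0.
have -> : (2 * M)^-1 = a / 2 by rewrite invfM mulrC.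
have -> : (4 * M)^-1 = a / 4 by rewrite invfM mulrC.
have -> : 2 * q * (N ^+ 2)^-1 * N = 2 * q * b * (b * N).
  by rewrite -exprVn -/b expr2; ring.
rewrite hb mulr1.
have hqb : q * b <= a / 8.
  have := ler_wpM2r (ltW (mulr_gt0 a0 b0)) h8.
  have -> : q * (8 * M) * (a * b) = 8 * (q * b) * (a * M) by ring.
  rewrite ha mulr1 -/b.
  have -> : N * (a * b) = a * (b * N) by ring.
  rewrite hb mulr1; lra.
nra.
Qed.

Lemma coefC (R : realType) (M N q : R) : 1 <= M -> 1 <= N -> 0 <= q -> q * (8 * M) <= N ->
  (1 + (2 * M)^-1) * (M^-1 * N^-1) + 2 * q * (N ^+ 2)^-1 <= 9 / (4 * M * N).
Proof.
move=> hM hN hq h8.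
have M0 : 0 < M by apply: lt_le_trans ltr01 hM.
have N0 : 0 < N by apply: lt_le_trans ltr01 hN.
set a := M^-1. have ha : a * M = 1 by rewrite mulVf ?gt_eqF.
have a0 : 0 < a by rewrite invr_gt0.
have a1 : a <= 1 by rewrite invf_le1.
set b := N^-1. have hb : b * N = 1 by rewrite mulVf ?gt_eqF.
have b0 : 0 < b by rewrite invr_gt0.
have -> : (2 * M)^-1 = a / 2 by rewrite invfM mulrC.
have -> : 9 / (4 * M * N) = 9 / 4 * a * b by rewrite !invfM -/a -/b; ring.
have -> : 2 * q * (N ^+ 2)^-1 = 2 * (q * b) * b by rewrite -exprVn -/b expr2; ring.
have hqb : q * b <= a / 8.
  have := ler_wpM2r (ltW (mulr_gt0 a0 b0)) h8.
  have -> : q * (8 * M) * (a * b) = 8 * (q * b) * (a * M) by ring.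
  rewrite ha mulr1 -/b.
  have -> : N * (a * b) = a * (b * N) by ring.
  rewrite hb mulr1; lra.
have := ler_wpM2r (ltW b0) hqb.
have : a * a * b <= a * b by rewrite ler_pM2r ?mulr_gt0 // ?ger_pMr // .
nra.
Qed.


Lemma run_succ (R : realType) (n m p : nat) gradf (W : 'M[R]_n) (alpha : R) x0 K
  (w : Omega n m K) k (hk : (k < K)%N) :
  run (p:=p) gradf W alpha x0 w k.+1 =
  step gradf W alpha (run gradf W alpha x0 w k) (w (Ordinal hk)).
Proof.
rewrite /run (take_nth (w (Ordinal hk))); last by rewrite size_map size_enum_ord.
rewrite -cats1 foldl_cat /=.
congr (step _ _ _ _ _); rewrite (nth_map (Ordinal hk)) ?size_enum_ord //.
by congr (w _); apply: val_inj => /=; rewrite nth_enum_ord.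
Qed.

Lemma run_meas (R : realType) (n m p : nat) gradf (W : 'M[R]_n) (alpha : R) x0 K
  (w w' : Omega n m K) k :
  (forall t : 'I_K, (t < k)%N -> w t = w' t) ->
  run (p:=p) gradf W alpha x0 w k = run gradf W alpha x0 w' k.
Proof.
move=> h; rewrite /run -(map_take k (fun t => w t)) -(map_take k (fun t => w' t)).
congr (foldl _ _ _); apply/eq_in_map => t ht.
apply: h; have := index_ltn ht; by rewrite index_enum_ord.
Qed.

Lemma counting (R : realType) (D : finType) (K k : nat) (kk : 'I_K) (hkk : (k <= kk)%N)
  (A : {ffun 'I_K -> D} -> bool) (hA : Fk_meas k A) (phi : D -> R)
  (w0 : {ffun 'I_K -> D}) :
  #|D|%:R * \sum_(w : {ffun 'I_K -> D}) phi (w kk) * (A w)%:R =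
  (\sum_(w : {ffun 'I_K -> D}) ((A w)%:R : R)) * \sum_d phi d.
Proof.
pose N d : R := \sum_(w : {ffun 'I_K -> D}) ((A w) && (w kk == d))%:R.
have hN : forall d d', N d = N d'.
  move=> d d'.
  pose sw (x : D) := if x == d then d' else if x == d' then d else x.
  have swK : involutive sw.
    move=> x; rewrite /sw.
    case: (eqVneq x d) => [->|hxd]; first by rewrite eqxx; case: eqVneq.
    case: (eqVneq x d') => [->|hxd']; first by rewrite eqxx.
    by rewrite (negbTE hxd) (negbTE hxd').
  pose sg (w : {ffun 'I_K -> D}) : {ffun 'I_K -> D} :=
    [ffun t => if t == kk then sw (w t) else w t].
  have sgK : involutive sg.
    move=> w; apply/ffunP => t; rewrite !ffunE.
    by case: (t == kk) => //; rewrite swK.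
  rewrite /N (reindex_inj (inv_inj sgK)).
  apply: eq_bigr => w _.
  have -> : A (sg w) = A w.
    apply: hA => t ht; rewrite ffunE.
    case: eqP => // e; move: ht; rewrite e ltnNge hkk //.
  rewrite ffunE eqxx.
  have -> : (sw (w kk) == d) = (w kk == d').
    have {1}-> : d = sw d'.
      by rewrite /sw; case: (eqVneq d' d) => [->|_]; rewrite ?eqxx.
    by rewrite (inj_eq (inv_inj swK)).
  by [].
have inner : forall w : {ffun 'I_K -> D}, \sum_d phi d * ((A w) && (w kk == d))%:R = phi (w kk) * (A w)%:R.
  move=> w; rewrite (bigD1 (w kk)) //= eqxx andbT big1 ?addr0 //.
  by move=> d hd; rewrite eq_sym (negbTE hd) andbF mulr0.
have inner1 : forall w : {ffun 'I_K -> D}, \sum_d (((A w) && (w kk == d))%:R : R) = (A w)%:R.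
  move=> w; rewrite (bigD1 (w kk)) //= eqxx andbT big1 ?addr0 //.
  by move=> d hd; rewrite eq_sym (negbTE hd) andbF.
under eq_bigr do rewrite -inner.
under [X in _ = X * _]eq_bigr do rewrite -inner1.
rewrite exchange_big /= [X in _ = X * _]exchange_big /=.
under eq_bigr do rewrite -mulr_sumr.
have eN : forall d, \sum_(w : {ffun 'I_K -> D}) (((A w) && (w kk == d))%:R : R) = N (w0 kk).
  by move=> d; rewrite -(hN d (w0 kk)).
under eq_bigr do rewrite eN.
under [X in _ = X * _]eq_bigr do rewrite eN.
rewrite -mulr_suml sumr_const.
have -> : #|(xpredT : pred D)| = #|D| by apply: eq_card.
rewrite -[N (w0 kk) *+ _]mulr_natl; ring.
Qed.

Lemma tk_ge0 (R : realType) (n m p : nat) (s : state R n m p) : 0 <= tk s.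
Proof.
apply: mulr_ge0; first by rewrite invr_ge0 ler0n.
apply: sumr_ge0 => i _; apply: mulr_ge0; first by rewrite invr_ge0 ler0n.
by apply: sumr_ge0 => j _; apply: sqn_ge0.
Qed.

Lemma ce_ge0 (R : realType) (n m p : nat) (s : state R n m p) : 0 <= consensus_err s.
Proof. by apply: sumr_ge0 => i _; apply: sqn_ge0. Qed.

Theorem corollary1 (R : realType) (n m p : nat)
  (hn : (0 < n)%N) (hm : (0 < m)%N) (hp : (0 < p)%N)
  (f : 'I_n -> 'I_m -> 'rV[R]_p -> R)
  (gradf : 'I_n -> 'I_m -> 'rV[R]_p -> 'rV[R]_p)
  (L : R) (hL : 0 < L)
  (hdiff : forall i j (x : 'rV[R]_p), differentiable (f i j) x /\
     forall v : 'rV[R]_p, 'd (f i j) x v = \sum_(l < p) gradf i j x 0 l * v 0 l)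
  (hsmooth : forall i j (x y : 'rV[R]_p),
     enorm (gradf i j x - gradf i j y) <= L * enorm (x - y))
  (hFbdd : exists c : R, forall x : 'rV[R]_p,
     c <= (n%:R)^-1 * \sum_(i < n) ((m%:R)^-1 * \sum_(j < m) f i j x))
  (W : 'M[R]_n)
  (hWnn : forall i j, 0 <= W i j)
  (hWprim : exists q : nat, forall i j, 0 < (W ^+ q) i j)
  (hWrow : forall i, \sum_(r < n) W i r = 1)
  (hWcol : forall r, \sum_(i < n) W i r = 1)
  (x0 : 'rV[R]_p) (alpha : R)
  (halpha : 0 < alpha)
  (halpha2 : alpha <= Num.sqrt (n%:R) / (Num.sqrt (8 * m%:R) * L))
  (k K : nat) (hkK : (k < K)%N)
  (Y : Omega n m K -> R)
  (hY : is_cond_exp k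
          (fun w : Omega n m K => tk (run gradf W alpha x0 w k.+1)) Y) :
  forall w : Omega n m K,
    Y w <= (1 - (4 * m%:R)^-1) * tk (run gradf W alpha x0 w k)
           + 4 * m%:R * alpha ^+ 2 * avg_grad_sq gradf (run gradf W alpha x0 w k)
           + 9 / (4 * m%:R * n%:R) * consensus_err (run gradf W alpha x0 w k).
Proof.
move=> w.
have hsm' : forall i j (x y : 'rV[R]_p), sqn (gradf i j x - gradf i j y) <= L ^+ 2 * sqn (x - y).
  by move=> i j x y; apply: enorm_sqn.
set s := run gradf W alpha x0 w k.
have hinv : inv s.
  rewrite /s /run; apply: inv_foldl => //; apply: inv_init.
have heta : 0 < (2 * m%:R : R)^-1 by rewrite invr_gt0 mulr_gt0 // ltr0n.
have hB := @main_bound R n m p gradf W alpha L hn hm hsm' hWcol s hinv _ heta.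
have hQ := @Q_bound R n m p L hn hm s.
set E := expect _ in hB.
have hE : E <= (1 - (4 * m%:R)^-1) * tk s + 4 * m%:R * alpha ^+ 2 * avg_grad_sq gradf s
           + 9 / (4 * m%:R * n%:R) * consensus_err s.
  set T := tk s in hB hQ *. set C := consensus_err s in hB hQ *.
  change (avg_grad_sq gradf s) with (sqn (Gv gradf s)).
  set G := sqn (Gv gradf s) in hB *.
  rewrite invrK in hB.
  have hM : 1 <= (m%:R : R) by rewrite ler1n.
  have hN : 1 <= (n%:R : R) by rewrite ler1n.
  have hq0 : 0 <= alpha ^+ 2 * L ^+ 2 by rewrite mulr_ge0 ?sqr_ge0.
  have hsq8 : 0 < Num.sqrt (8 * m%:R : R) by rewrite sqrtr_gt0 mulr_gt0 // ltr0n.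
  have h1 : alpha * (Num.sqrt (8 * m%:R) * L) <= Num.sqrt (n%:R : R).
    by rewrite -ler_pdivlMr ?mulr_gt0.
  have h0 : 0 <= alpha * (Num.sqrt (8 * m%:R) * L) by rewrite ltW // !mulr_gt0.
  have h2 := ler_pM h0 h0 h1 h1.
  rewrite -!expr2 sqr_sqrtr ?ler0n // !exprMn sqr_sqrtr ?mulr_ge0 ?ler0n // in h2.
  have hq8 : alpha ^+ 2 * L ^+ 2 * (8 * m%:R) <= n%:R.
    by apply: le_trans h2; rewrite le_eqVlt; apply/orP; left; apply/eqP; ring.
  have hT := ler_wpM2r (tk_ge0 s) (coefT hM hN hq0 hq8).
  have hC := ler_wpM2r (ce_ge0 s) (coefC hM hN hq0 hq8).
  have hQ2 := ler_wpM2l (sqr_ge0 alpha) hQ.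
  have hG0 : 0 <= alpha ^+ 2 * G by rewrite mulr_ge0 ?sqr_ge0 ?sqn_ge0.
  have hG : (2 * m%:R + 1) * alpha ^+ 2 * G <= 4 * m%:R * alpha ^+ 2 * G.
    have h4 : 2 * (m%:R : R) + 1 <= 4 * m%:R by lra.
    by have := ler_wpM2r hG0 h4; rewrite !mulrA.
  rewrite -/T -/C in hT hC.
  nra.
apply: le_trans hE; rewrite le_eqVlt; apply/orP; left; apply/eqP.
case: hY => hYm hYA.
pose A := fun w' : Omega n m K => [forall t : 'I_K, (t < k)%N ==> (w' t == w t)].
have hAm : Fk_meas k A.
  move=> w1 w2 h; apply: eq_forallb => t; case ht: (t < k)%N => //=; by rewrite h.
have hAw : forall w', A w' -> forall t : 'I_K, (t < k)%N -> w' t = w t.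
  move=> w' /forallP h t ht; by move/implyP: (h t) => /(_ ht) /eqP.
have hAww : A w by apply/forallP => t; apply/implyP => _.
have H := hYA A hAm.
rewrite /expect in H.
have hO : (#|{: Omega n m K}|%:R : R)^-1 != 0.
  rewrite invr_eq0 pnatr_eq0 -lt0n card_ffun expn_gt0.
  by apply/orP; left; apply: cardD.
move/(mulfI hO): H => H.
set kk := Ordinal hkK.
pose phi := fun d : draw n m => tk (step gradf W alpha s d).
have HX : \sum_w' tk (run gradf W alpha x0 w' k.+1) * (A w')%:R
        = \sum_(w' : Omega n m K) phi (w' kk) * (A w')%:R.
  apply: eq_bigr => w' _; case hA: (A w'); last by rewrite !mulr0.
  rewrite (run_succ _ _ _ _ _ hkK) /phi /s.
  by rewrite (run_meas _ _ _ _ (w' := w) (hAw w' hA)).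
have HY : \sum_w' Y w' * (A w')%:R = Y w * \sum_(w' : Omega n m K) ((A w')%:R : R).
  rewrite mulr_sumr; apply: eq_bigr => w' _; case hA: (A w'); last by rewrite !mulr0.
  by rewrite (hYm w' w (hAw w' hA)).
rewrite HX HY in H.
have Hc := @counting R (draw n m) K k kk (leqnn k) A hAm phi w.
rewrite H in Hc.
have SA : 0 < \sum_(w' : Omega n m K) ((A w')%:R : R).
  rewrite (bigD1 w) //= hAww.
  apply: (@lt_le_trans _ _ 1); first exact: ltr01.
  by rewrite lerDl sumr_ge0 // => i _; rewrite ler0n.
have hD : (0 < #|{: draw n m}|)%N by apply: cardD.
have hDR : (#|{: draw n m}|%:R : R) != 0 by rewrite pnatr_eq0 -lt0n.
rewrite /E expectE.
have : #|{: draw n m}|%:R * (Y w * \sum_(w' : Omega n m K) ((A w')%:R : R)) =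
   #|{: draw n m}|%:R * ((\sum_(w' : Omega n m K) ((A w')%:R : R)) *
      ((#|{: draw n m}|%:R)^-1 * \sum_d phi d)).
  by rewrite Hc; field.
move/(mulfI hDR) => Hc2.
rewrite -(mulfK (negbT (gt_eqF SA)) (Y w)) Hc2 mulrC mulrA mulVf ?gt_eqF // mul1r.
by [].
Qed.
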